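(* In an ordinal setting with indifference classes, let $f:\Sigma\to O$ be a social choice function. (i) If $f$ is pseudomonotone, then for every $\varepsilon>0$ there is a lex-truthful randomized mechanism that $\varepsilon$-implements $f$. (ii) Conversely, if for some $\varepsilon<\frac12$ there is a lex-truthful randomized mechanism that $\varepsilon$-implements $f$, then $f$ is pseudomonotone.
   Context: Setting: a set $N$ of $n$ agents and a finite set $O$ of outcomes. For each agent $j$ there is a fixed partition of $O$ into indifference classes $O^j_1,\dots,O^j_{m_j}$; each allowed preference $\succeq_j\in\Sigma_j$ is a strict total order on these classes, and $\Sigma=\prod_j\Sigma_j$. For $o\in O$, $\mathrm{pos}_{\succeq_j}(o)\in[m_j]$ is the rank under $\succeq_j$ of the class containing $o$; $o\succeq_j o'$ iff $\mathrm{pos}_{\succeq_j}(o)\le\mathrm{pos}_{\succeq_j}(o')$ and $o\succ_j o'$ iff $\mathrm{pos}_{\succeq_j}(o)<\mathrm{pos}_{\succeq_j}(o')$. A social choice function is a map $f:\Sigma\to O$. $f$ is pseudomonotone if for every agent $j$, every $\succeq_{-j}$, and all $\succeq_j,\succeq'_j\in\Sigma_j$, with $o=f(\succeq_j,\succeq_{-j})$, $o'=f(\succeq'_j,\succeq_{-j})$: either $o\succeq_j o'$, or there is $o''$ with $o''\succ_j o'$ and $\mathrm{pos}_{\succeq_j}(o'')<\mathrm{pos}_{\succeq'_j}(o'')$. A randomized mechanism maps profiles to distributions over $O$ and $\varepsilon$-implements $f$ if $\Pr[\mathcal{M}(\succeq)=f(\succeq)]\ge1-\varepsilon$ for every profile.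 For a lottery $p$ and $S\subseteq O$ let $p(S)=\sum_{o\in S}p(o)$. Given $\succeq_j$ and lotteries $p,q$, $p$ lex-dominates $q$ w.r.t. $\succeq_j$ if there is $r\in[m_j]$ such that, listing $j$'s classes in the order of $\succeq_j$, $p$ gives strictly more total probability than $q$ to the $r$-th class and the same total probability to each of the first $r-1$ classes. $\mathcal{M}$ is lex-truthful if for all $j$, all profiles $\succeq$ and all $\succeq'_j\in\Sigma_j$, either $\mathcal{M}(\succeq)$ and $\mathcal{M}(\succeq'_j,\succeq_{-j})$ assign the same total probability to each class $O^j_r$, or $\mathcal{M}(\succeq)$ lex-dominates $\mathcal{M}(\succeq'_j,\succeq_{-j})$ w.r.t. $\succeq_j$. *)

(* Defs.v *)
From mathcomp Require Import all_boot all_order all_algebra all_fingroup.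
From mathcomp Require Import reals.
Set Implicit Arguments. Unset Strict Implicit. Unset Printing Implicit Defensive.
Import Order.TTheory GRing.Theory Num.Theory.
Local Open Scope ring_scope.

(* Agent j's indifference classes are
   indexed by 'I_(m j); cls j o is the class of outcome o.  A preference of
   agent j is a strict total order on its classes, represented by a permutation
   r : {perm 'I_(m j)} sending each class to its rank (0 = best). *)

Section Setting.
Variables (n : nat) (O : finType) (m : 'I_n -> nat)
          (cls : forall j : 'I_n, O -> 'I_(m j))
          (Sigma : forall j : 'I_n, {set {perm 'I_(m j)}}).

Definition profile := forall j : 'I_n, {perm 'I_(m j)}.

Definition valid_profile (p : profile) : Prop := forall j, p j \in Sigma j.

Definition upd (p : profile) (j : 'I_n) (r : {perm 'I_(m j)}) : profile :=
  dfwith (T := fun k => {perm 'I_(m k)}) p r.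

Definition pos (j : 'I_n) (r : {perm 'I_(m j)}) (o : O) : nat := r (cls j o).

Definition pseudomonotone (f : profile -> O) : Prop :=
  forall (j : 'I_n) (p : profile) (r' : {perm 'I_(m j)}),
    valid_profile p -> r' \in Sigma j ->
    let o := f p in let o' := f (upd p r') in
    (pos (p j) o <= pos (p j) o')%N \/
    exists o'' : O, (pos (p j) o'' < pos (p j) o')%N /\
                    (pos (p j) o'' < pos r' o'')%N.

Variable R : realType.

Definition is_lottery (q : {ffun O -> R}) : Prop :=
  (forall o, 0 <= q o) /\ \sum_(o : O) q o = 1.

Definition is_mechanism (M : profile -> {ffun O -> R}) : Prop :=
  forall p, valid_profile p -> is_lottery (M p).

Definition cmass (q : {ffun O -> R}) (j : 'I_n) (c : 'I_(m j)) : R :=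
  \sum_(o : O | cls j o == c) q o.

(* q1 lex-dominates q2 w.r.t. r: the class at rank k is (r^-1 k) *)
Definition lex_dominates (j : 'I_n) (r : {perm 'I_(m j)})
    (q1 q2 : {ffun O -> R}) : Prop :=
  exists k : 'I_(m j),
    cmass q2 ((r^-1)%g k) < cmass q1 ((r^-1)%g k) /\
    forall k' : 'I_(m j), (k' < k)%N ->
      cmass q1 ((r^-1)%g k') = cmass q2 ((r^-1)%g k').

Definition lex_truthful (M : profile -> {ffun O -> R}) : Prop :=
  forall (j : 'I_n) (p : profile) (r' : {perm 'I_(m j)}),
    valid_profile p -> r' \in Sigma j ->
    (forall c : 'I_(m j), cmass (M p) c = cmass (M (upd p r')) c) \/
    lex_dominates (p j) (M p) (M (upd p r')).

Definition eps_implements (M : profile -> {ffun O -> R}) (eps : R)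
    (f : profile -> O) : Prop :=
  forall p, valid_profile p -> 1 - eps <= M p (f p).

End Setting.

(* Main.v *)
Require Import Defs.
From mathcomp Require Import all_boot all_order all_algebra all_fingroup.
From mathcomp Require Import reals.
From mathcomp Require Import ring lra zify.
From Stdlib Require Import Classical FunctionalExtensionality.
Import Order.TTheory GRing.Theory Num.Theory.
Set Implicit Arguments. Unset Strict Implicit. Unset Printing Implicit Defensive.
Local Open Scope ring_scope.

Lemma first_idx (m : nat) (P : pred 'I_m) :
  (forall k, ~~ P k) \/ exists k, P k /\ forall k' : 'I_m, (k' < k)%N -> ~~ P k'.
Proof.
case: (pickP P) => [x Px | none]; last by left => k; rewrite none.
right; case: (arg_minnP (fun i : 'I_m => nat_of_ord i) Px) => k Pk kmin.
exists k; split => // k' lt; apply/negP => Pk'.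
by have := kmin _ Pk'; rewrite leqNgt lt.
Qed.

Lemma perm_first_gt (m : nat) (g : {perm 'I_m}) (k0 : 'I_m) :
  (forall k' : 'I_m, (k' < k0)%N -> g k' = k') -> g k0 != k0 -> (k0 < g k0)%N.
Proof.
move=> fix0 ne; rewrite ltn_neqAle eq_sym.
have -> : (nat_of_ord (g k0) != k0) by [].
rewrite /= leqNgt; apply/negP => lt.
have := fix0 _ lt => /perm_inj eq.
by move: lt; rewrite eq ltnn.
Qed.
Arguments perm_first_gt {m g k0}. Arguments first_idx {m}.

Lemma ordF (m : nat) (i j : 'I_m) : (i < j)%N -> (j == i) = false.
Proof. move=> h; apply/negbTE; by rewrite -val_eqE /= gtn_eqF. Qed.
Lemma ordF' (m : nat) (i j : 'I_m) : (i < j)%N -> (i == j) = false.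
Proof. by move=> h; rewrite eq_sym ordF. Qed.
Arguments ordF {m i j}. Arguments ordF' {m i j}.

Lemma keyE (R : realFieldType) (m : nat) (g : {perm 'I_m}) (t t' : 'I_m)
  (E : 'I_m -> R) (a d : R) (w : nat -> R)
  (hd : 0 < d) (ha : forall x y : 'I_m, 0 < a + d * (w x - w y))
  (hw : forall x y : 'I_m, (x < y)%N -> w y < w x)
  (hE : forall k, E k = a * ((t == k)%:R - (t' == k)%:R) + d * (w k - w (g k)))
  (hyp : (t <= t')%N \/ exists s : 'I_m, (s < t')%N /\ (s < g s)%N) :
  (forall k, E k = 0) \/ exists k, 0 < E k /\ forall k' : 'I_m, (k' < k)%N -> E k' = 0.
Proof.
case: (@first_idx m (fun k => g k != k)) => [none|[k0 [gk0 fix0]]].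
- have gid : forall k, g k = k by move=> k; apply/eqP; exact: negbNE (none k).
  case: (ltngtP t t') => [lt|gt|eq].
  + right; exists t; split.
      have := ha t t; rewrite hE gid eqxx (ordF lt) subrr mulr0 addr0 subr0 mulr1/=; lra.
    move=> k' lt'; rewrite hE gid !ordF //; last exact: ltn_trans lt' lt.
    rewrite subrr/=; lra.
  + by case: hyp => [le|[s [_ lt]]]; [rewrite leqNgt gt in le | rewrite gid ltnn in lt].
  + have e : t = t' by apply: val_inj.
    by left => k; rewrite hE gid e !subrr/=; lra.
- have fix0' : forall k' : 'I_m, (k' < k0)%N -> g k' = k'.
    by move=> k' lt; apply/eqP; exact: negbNE (fix0 _ lt).
  have gt0 := perm_first_gt fix0' gk0.
  have pos0 : 0 < d * (w k0 - w (g k0)) by rewrite mulr_gt0 // subr_gt0 hw.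
  have below : forall k' : 'I_m, (k' < k0)%N -> (k' < t)%N -> (k' < t')%N -> E k' = 0.
    by move=> k' l1 l2 l3; rewrite hE fix0' // !ordF // !subrr/=; lra.
  case: (ltngtP t t') => [lt|gt|eq].
  + case: (ltnP k0 t) => [k0t | tk0].
    * right; exists k0; split.
        rewrite hE !ordF //; last exact: ltn_trans k0t lt. lra.
      move=> k' l; apply: below => //; [exact: ltn_trans l k0t|].
      exact: ltn_trans (ltn_trans l k0t) lt.
    * right; exists t; split.
        have := ha t (g t); rewrite hE eqxx (ordF lt)/=; lra.
      move=> k' l; rewrite hE fix0' ?(leq_trans l tk0) // !ordF //; last exact: ltn_trans l lt.
      rewrite !subrr/=; lra.
  + case: hyp => [le|[s [st' sg]]]; first by rewrite leqNgt gt in le.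
    have k0s : (k0 <= s)%N.
      rewrite leqNgt; apply/negP => l; by rewrite fix0' // ltnn in sg.
    have k0t' : (k0 < t')%N := leq_ltn_trans k0s st'.
    right; exists k0; split.
      rewrite hE !ordF //; last exact: ltn_trans k0t' gt. lra.
    move=> k' l; apply: below => //; last exact: ltn_trans l k0t'.
    exact: ltn_trans (ltn_trans l k0t') gt.
  + have e : t = t' by apply: val_inj.
    right; exists k0; split; first by rewrite hE e subrr/=; lra.
    by move=> k' l; rewrite hE e fix0' // !subrr/=; lra.
Qed.

Definition Sw (R : realType) (mm : nat) : R := \sum_(i < mm) (mm - i)%:R.
Definition wt (R : realType) (mm : nat) (k : nat) : R := (mm - k)%:R / Sw R mm.

Lemma Sw_nat (R : realType) mm : Sw R mm = (\sum_(i < mm) (mm - i))%:R.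
Proof. by rewrite /Sw natr_sum. Qed.

Lemma Sw_ge (R : realType) mm k : (mm - k <= \sum_(i < mm) (mm - i))%N.
Proof.
case: mm => [|mm] //; rewrite big_ord_recl /=.
apply: leq_trans (leq_addr _ _); rewrite subn0; exact: leq_subr.
Qed.

Lemma Sw_gt0 (R : realType) mm : (0 < mm)%N -> 0 < Sw R mm.
Proof.
move=> h; rewrite Sw_nat ltr0n; apply: leq_trans (Sw_ge R mm 0); by rewrite subn0.
Qed.

Lemma wt_ge0 (R : realType) mm k : 0 <= wt R mm k.
Proof.
rewrite /wt; case: mm => [|mm]; first by rewrite /Sw big_ord0 invr0 mulr0.
by rewrite divr_ge0 // ltW // Sw_gt0.
Qed.

Lemma wt_le1 (R : realType) mm k : wt R mm k <= 1.
Proof.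
rewrite /wt; case: mm => [|mm]; first by rewrite /Sw big_ord0 invr0 mulr0.
rewrite ler_pdivrMr ?Sw_gt0 // mul1r Sw_nat ler_nat; exact: Sw_ge.
Qed.

Lemma wt_lt (R : realType) mm (k l : nat) : (k < l)%N -> (l < mm)%N ->
  wt R mm l < wt R mm k.
Proof.
move=> kl lm; rewrite /wt ltr_pM2r ?invr_gt0 ?Sw_gt0 //; last by lia.
rewrite ltr_nat; lia.
Qed.

Lemma wt_sum (R : realType) mm (r : {perm 'I_mm}) :
  (0 < mm)%N -> \sum_(c < mm) wt R mm (r c) = 1.
Proof.
move=> h.
rewrite -(reindex_inj (h := r) (P := xpredT) (F := fun k : 'I_mm => wt R mm k)) //=;
  last exact: perm_inj.
by rewrite /wt -mulr_suml -/(Sw R mm) divff // gt_eqF // Sw_gt0.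
Qed.

Definition Ncl (R : realType) (O : finType) (mm : nat) (cl : O -> 'I_mm) (c : 'I_mm) : R :=
  #|[set o | cl o == c]|%:R.

Definition hh (R : realType) (O : finType) (mm : nat) (cl : O -> 'I_mm)
  (r : {perm 'I_mm}) (o : O) : R :=
  wt R mm (r (cl o)) / Ncl R cl (cl o).

Lemma hh_ge0 R O mm cl r o : 0 <= @hh R O mm cl r o.
Proof. by rewrite /hh divr_ge0 ?wt_ge0 // /Ncl ler0n. Qed.

Lemma hh_cls R (O : finType) mm (cl : O -> 'I_mm) r (c : 'I_mm) :
  (exists o, cl o = c) ->
  \sum_(o | cl o == c) @hh R O mm cl r o = wt R mm (r c).
Proof.
move=> [o0 ho0].
rewrite (eq_bigr (fun _ => wt R mm (r c) / Ncl R cl c)); last by move=> o /eqP; rewrite /hh => ->.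
rewrite (eq_bigl (fun o => o \in [set o | cl o == c])); last by move=> o; rewrite inE.
rewrite sumr_const -mulr_natr -/(Ncl R cl c) divfK // /Ncl pnatr_eq0 -lt0n card_gt0.
by apply/set0Pn; exists o0; rewrite inE ho0.
Qed.

Lemma hh_sum R (O : finType) mm (cl : O -> 'I_mm) r :
  (forall c, exists o, cl o = c) -> (0 < mm)%N ->
  \sum_o @hh R O mm cl r o = 1.
Proof.
move=> surj h.
rewrite (partition_big cl xpredT) //=.
rewrite (eq_bigr (fun c => wt R mm (r c))); first exact: wt_sum.
by move=> c _; apply: hh_cls.
Qed.

Definition Mech (R : realType) (n : nat) (O : finType) (m : 'I_n -> nat)
  (cls : forall j : 'I_n, O -> 'I_(m j)) (f : profile m -> O) (a d : R)
  (p : profile m) : {ffun O -> R} :=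
  [ffun o => a * (o == f p)%:R + d * \sum_(i < n) hh R (cls i) (p i) o].

Lemma sum_ind (R : realType) (O : finType) mm (cl : O -> 'I_mm) (x : O) c :
  \sum_(o | cl o == c) (o == x)%:R = (cl x == c)%:R :> R.
Proof.
rewrite big_mkcond (bigD1 x) //= eqxx big1 ?addr0; first by case: (cl x == c).
by move=> o /negbTE ->; case: (cl o == c).
Qed.

Lemma cmass_Mech (R : realType) (n : nat) (O : finType) (m : 'I_n -> nat)
  (cls : forall j : 'I_n, O -> 'I_(m j)) (f : profile m -> O) (a d : R) p j c :
  cmass cls (Mech cls f a d p) c = a * (cls j (f p) == c)%:R +
     d * \sum_(i < n) \sum_(o | cls j o == c) hh R (cls i) (p i) o.
Proof.
rewrite /cmass (eq_bigr (fun o => a * (o == f p)%:R + d * \sum_(i < n) hh R (cls i) (p i) o));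
  last by move=> o _; rewrite ffunE.
rewrite big_split /= -!mulr_sumr sum_ind; congr (_ + _ * _).
by rewrite exchange_big.
Qed.

Lemma eq_permV (mm : nat) (r : {perm 'I_mm}) (x k : 'I_mm) :
  (x == (r^-1)%g k) = (r x == k).
Proof. by apply/eqP/eqP => [->|<-]; rewrite ?permKV ?permK. Qed.

Lemma Mech_lex (R : realType) (n : nat) (O : finType) (m : 'I_n -> nat)
  (cls : forall j : 'I_n, O -> 'I_(m j))
  (cls_surj : forall (j : 'I_n) (c : 'I_(m j)), exists o : O, cls j o = c)
  (Sigma : forall j : 'I_n, {set {perm 'I_(m j)}})
  (f : profile m -> O) (a d : R) (hd : 0 < d) (hda : d < a)
  (pm : pseudomonotone cls Sigma f) :
  lex_truthful cls Sigma (Mech cls f a d).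
Proof.
move=> j p r' vp hr'.
set p' := upd p r'.
have pj' : p' j = r' by rewrite /p' /upd dfwith_in.
have pi' : forall i, j != i -> p' i = p i by move=> i ne; rewrite /p' /upd dfwith_out.
set X := fun c : 'I_(m j) =>
  d * \sum_(i < n | i != j) \sum_(o | cls j o == c) hh R (cls i) (p i) o.
have hA : forall c, cmass cls (Mech cls f a d p) c =
    X c + a * (cls j (f p) == c)%:R + d * wt R (m j) (p j c).
  move=> c; rewrite cmass_Mech (bigD1 j) //= hh_cls // mulrDr /X; lra.
have hB : forall c, cmass cls (Mech cls f a d p') c =
    X c + a * (cls j (f p') == c)%:R + d * wt R (m j) (r' c).
  move=> c; rewrite cmass_Mech (bigD1 j) //= pj' hh_cls // mulrDr /X.
  rewrite (eq_bigr (fun i => \sum_(o | cls j o == c) hh R (cls i) (p i) o)); first lra.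
  by move=> i ne; rewrite pi' // eq_sym.
set r := p j.
set g := (r^-1 * r')%g.
have ha : forall x y : 'I_(m j), 0 < a + d * (wt R (m j) x - wt R (m j) y).
  move=> x y; have := mulr_ge0 (ltW hd) (wt_ge0 R (m j) x).
  have : d * wt R (m j) y <= d * 1 := ler_wpM2l (ltW hd) (wt_le1 R (m j) y).
  lra.
have hw : forall x y : 'I_(m j), (x < y)%N -> wt R (m j) y < wt R (m j) x.
  by move=> x y xy; apply: wt_lt.
have := @keyE R (m j) g (r (cls j (f p))) (r (cls j (f p')))
  (fun k => cmass cls (Mech cls f a d p) ((r^-1)%g k) -
                 cmass cls (Mech cls f a d p') ((r^-1)%g k)) a d (wt R (m j)) hd ha hw.
case.
- move=> k; rewrite /= hA hB !eq_permV permKV /g permM; lra.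
- case: (pm j p r' vp hr') => [le|[o'' [h1 h2]]]; [by left | right].
  exists (r (cls j o'')); split => //; by rewrite /g permM permK.
- move=> allz; left => c; have := allz (r c); rewrite permK; lra.
- move=> [k [pos low]]; right; exists k; split; first lra.
  by move=> k' lk; have := low k' lk; lra.
Qed.

Lemma mass_le (R : realType) (O : finType) mm (cl : O -> 'I_mm) (q : {ffun O -> R})
  (x : O) (c : 'I_mm) :
  (forall o, 0 <= q o) -> \sum_o q o = 1 -> cl x != c ->
  \sum_(o | cl o == c) q o + q x <= 1.
Proof.
move=> ge0 s1 ne; rewrite -s1 [X in _ <= X](bigID (fun o => cl o == c)) /= lerD2l.
rewrite (bigD1 x) //= lerDl; exact: sumr_ge0.
Qed.

Lemma mass_ge (R : realType) (O : finType) mm (cl : O -> 'I_mm) (q : {ffun O -> R})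
  (x : O) (c : 'I_mm) :
  (forall o, 0 <= q o) -> cl x == c -> q x <= \sum_(o | cl o == c) q o.
Proof. by move=> ge0 e; rewrite (bigD1 x) //= lerDl; exact: sumr_ge0. Qed.

Lemma partii (R : realType) (n : nat) (O : finType) (m : 'I_n -> nat)
    (cls : forall j : 'I_n, O -> 'I_(m j))
    (cls_surj : forall (j : 'I_n) (c : 'I_(m j)), exists o : O, cls j o = c)
    (Sigma : forall j : 'I_n, {set {perm 'I_(m j)}})
    (f : profile m -> O) (eps : R) (heps : eps < 2^-1)
    (M : profile m -> {ffun O -> R})
    (mech : is_mechanism Sigma M) (lt : lex_truthful cls Sigma M)
    (imp : eps_implements Sigma M eps f) :
  pseudomonotone cls Sigma f.
Proof.
move=> j p r' vp hr' o o'.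
set p' := upd p r'.
have vp' : valid_profile Sigma p'.
  move=> i; rewrite /p' /upd; case: (eqVneq j i) => [<-|ne].
    by rewrite dfwith_in.
  by rewrite dfwith_out.
have pj' : p' j = r' by rewrite /p' /upd dfwith_in.
have pp : upd p' (p j) = p.
  apply: functional_extensionality_dep => i; rewrite /upd.
  case: (eqVneq j i) => [<-|ne]; first by rewrite dfwith_in.
  by rewrite dfwith_out // /p' /upd dfwith_out.
set r := p j.
rewrite /pos -/r.
case: (leqP (r (cls j o)) (r (cls j o'))) => [le|gt]; first by left.
right; case: (classic (exists o'' : O, (r (cls j o'') < r (cls j o'))%N /\
                                     (r (cls j o'') < r' (cls j o''))%N)) => // no.
exfalso.
have neC : cls j o != cls j o'.
  by apply/negP => /eqP e; move: gt; rewrite e ltnn.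
have [ge0 s1] := mech p vp.
have [ge0' s1'] := mech p' vp'.
have i1 := imp p vp. have i2 := imp p' vp'.
have LT : cmass cls (M p) (cls j o') < cmass cls (M p') (cls j o').
  have := mass_le (cl := cls j) (x := o) (c := cls j o') ge0 s1 neC.
  have := mass_ge (cl := cls j) (x := o') (c := cls j o') ge0' (eqxx _).
  rewrite /cmass -/o -/o' in i1 i2 *. lra.
have fixall : forall k' : 'I_(m j), (k' < r (cls j o'))%N -> r' ((r^-1)%g k') = k'.
  case: (@first_idx _ (fun k => (k < r (cls j o'))%N && ((r^-1 * r')%g k != k)))
    => [none|[k0 [/andP [k0l gk0] low]]].
    move=> k' l; have := none k'; rewrite l /= negbK permM => /eqP //.
  exfalso; apply: no.
  have fx : forall k' : 'I_(m j), (k' < k0)%N -> (r^-1 * r')%g k' = k'.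
    move=> k' l; have := low k' l; rewrite (ltn_trans l k0l) /= negbK => /eqP //.
  have gt0 := perm_first_gt fx gk0.
  have [o'' ho''] := cls_surj j ((r^-1)%g k0).
  exists o''; rewrite ho'' permKV; split => //.
  by move: gt0; rewrite permM.
have fixV : forall k' : 'I_(m j), (k' < r (cls j o'))%N -> (r'^-1)%g k' = (r^-1)%g k'.
  by move=> k' l; apply: (@perm_inj _ r'); rewrite permKV fixall.
case: (lt j p r' vp hr') => [alleq | [k [s1k eq1]]].
  by move: LT; rewrite alleq -/p' ltxx.
have kl : (k < r (cls j o'))%N.
  case: (ltngtP k (r (cls j o'))) => // [g2|e].
    by move: LT; rewrite -{1 2}(permK r (cls j o')) eq1 // ltxx.
  have e' : k = r (cls j o') by apply: val_inj.
  by move: s1k; rewrite e' permK -/p'; lra.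
have := lt j p' (p j) vp' (vp j); rewrite pp pj'.
case=> [alleq | [k2 [s2 eq2]]].
  by move: LT; rewrite alleq ltxx.
case: (ltngtP k2 k) => [l|g2|e].
- move: s2; rewrite fixV ?(ltn_trans l kl) // eq1 // -/p' ltxx //.
- move: s1k; rewrite -fixV // -eq2 // -/p'; rewrite fixV //; lra.
- have e' : k2 = k by apply: val_inj.
  move: s2 s1k; rewrite e' fixV // -/p'; lra.
Qed.

Lemma Mech_mech (R : realType) (n : nat) (O : finType) (m : 'I_n -> nat)
  (cls : forall j : 'I_n, O -> 'I_(m j))
  (cls_surj : forall (j : 'I_n) (c : 'I_(m j)), exists o : O, cls j o = c)
  (Sigma : forall j : 'I_n, {set {perm 'I_(m j)}})
  (f : profile m -> O) (a d : R) (ha : 0 <= a) (hd : 0 <= d)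
  (hs : a + d * n%:R = 1) :
  is_mechanism Sigma (Mech cls f a d).
Proof.
move=> p _; split.
  move=> o; rewrite ffunE addr_ge0 ?mulr_ge0 ?ler0n ?sumr_ge0 // => i _.
  exact: hh_ge0.
rewrite (eq_bigr (fun o => a * (o == f p)%:R + d * \sum_(i < n) hh R (cls i) (p i) o));
  last by move=> o _; rewrite ffunE.
rewrite big_split /= -!mulr_sumr exchange_big /=.
have -> : \sum_o (o == f p)%:R = 1 :> R.
  by rewrite (bigD1 (f p)) //= eqxx big1 ?addr0 // => o /negbTE ->.
rewrite (eq_bigr (fun _ => 1)); last first.
  move=> i _; apply: hh_sum => //.
  exact: leq_ltn_trans (leq0n _) (ltn_ord (cls i (f p))).
rewrite sumr_const card_ord.
by rewrite mulr1.
Qed.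

Lemma Mech_impl (R : realType) (n : nat) (O : finType) (m : 'I_n -> nat)
  (cls : forall j : 'I_n, O -> 'I_(m j))
  (Sigma : forall j : 'I_n, {set {perm 'I_(m j)}})
  (f : profile m -> O) (a d eps : R) (hd : 0 <= d) (ha : 1 - eps <= a) :
  eps_implements Sigma (Mech cls f a d) eps f.
Proof.
move=> p _; rewrite ffunE eqxx mulr1.
have : 0 <= d * \sum_(i < n) hh R (cls i) (p i) (f p).
  by rewrite mulr_ge0 // sumr_ge0 // => i _; exact: hh_ge0.
lra.
Qed.

Theorem theorem5 (R : realType) (n : nat) (O : finType) (m : 'I_n -> nat)
    (cls : forall j : 'I_n, O -> 'I_(m j))
    (cls_surj : forall (j : 'I_n) (c : 'I_(m j)), exists o : O, cls j o = c)
    (Sigma : forall j : 'I_n, {set {perm 'I_(m j)}})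
    (f : profile m -> O) :
  (pseudomonotone cls Sigma f ->
     forall eps : R, 0 < eps ->
       exists M : profile m -> {ffun O -> R},
         [/\ is_mechanism Sigma M, lex_truthful cls Sigma M
           & eps_implements Sigma M eps f]) /\
  ((exists eps : R, eps < 2^-1 /\
      exists M : profile m -> {ffun O -> R},
        [/\ is_mechanism Sigma M, lex_truthful cls Sigma M
          & eps_implements Sigma M eps f]) ->
     pseudomonotone cls Sigma f).
Proof.
split; last first.
  by move=> [eps [heps [M [h1 h2 h3]]]]; exact: (partii cls_surj heps h1 h2 h3).
move=> pm eps heps.
set c := Num.min eps 2^-1.
have c0 : 0 < c by rewrite lt_min heps invr_gt0 ltr0n.
have ce : c <= eps by rewrite ge_min lexx.
have ch : c <= 2^-1 by rewrite ge_min lexx orbT.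
set d := c / (n%:R + 1).
have n1 : 0 < n%:R + 1 :> R by rewrite ltr_wpDl ?ler0n.
have d0 : 0 < d by rewrite divr_gt0.
have dc : n%:R * d + d = c.
  by rewrite /d -{2}(mul1r (c / _)) -mulrDl mulrC divfK // gt_eqF.
have x0 : 0 <= n%:R * d by rewrite mulr_ge0 ?ler0n // ltW.
set a := 1 - n%:R * d.
exists (Mech cls f a d); split.
- apply: Mech_mech => //; [rewrite /a; lra | exact: ltW | rewrite /a mulrC; lra].
- apply: Mech_lex => //; rewrite /a; lra.
- apply: Mech_impl; [exact: ltW | rewrite /a; lra].
Qed.
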